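(* Let $T\in L_{aut}(\mathcal B)$ be generalized hyperbolic with splitting $\mathcal B=E^-\oplus E^+$, and let $x\in\mathcal B$ satisfy $T^kx=x$ for some integer $k\ge1$. Then there is $v\in T^k(E^-)\cap E^+$ such that $x=\sum_{n\in\mathbb Z}T^{nk}v$, the series converging absolutely.
   Context: $\mathcal B$ is a Banach space. $T$ is generalized hyperbolic if there is a decomposition $\mathcal B=E^-\oplus E^+$ into complementary closed subspaces with $T(E^+)\subset E^+$, $T^{-1}(E^-)\subset E^-$, and $T|_{E^+}$, $T^{-1}|_{E^-}$ uniform contractions (there are $C\ge1$, $\lambda\in(0,1)$ with $|T^nx|\le C\lambda^n|x|$ on $E^+$ and $|T^{-n}x|\le C\lambda^n|x|$ on $E^-$ for $n\ge0$). *)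

(* Defs.v *)
From Stdlib Require Import Reals Lra ZArith.
Open Scope R_scope.

Record Banach := MkBanach {
  bcar :> Type;
  bzero : bcar;
  badd : bcar -> bcar -> bcar;
  bopp : bcar -> bcar;
  bscal : R -> bcar -> bcar;
  bnorm : bcar -> R;
  badd_assoc : forall x y z, badd x (badd y z) = badd (badd x y) z;
  badd_comm : forall x y, badd x y = badd y x;
  badd_0 : forall x, badd x bzero = x;
  badd_opp : forall x, badd x (bopp x) = bzero;
  bscal_1 : forall x, bscal 1 x = x;
  bscal_assoc : forall a b x, bscal a (bscal b x) = bscal (a * b) x;
  bscal_distr_l : forall a x y, bscal a (badd x y) = badd (bscal a x) (bscal a y);
  bscal_distr_r : forall a b x, bscal (a + b) x = badd (bscal a x) (bscal b x);
  bnorm_nonneg : forall x, 0 <= bnorm x;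
  bnorm_eq0 : forall x, bnorm x = 0 -> x = bzero;
  bnorm_scal : forall a x, bnorm (bscal a x) = Rabs a * bnorm x;
  bnorm_triangle : forall x y, bnorm (badd x y) <= bnorm x + bnorm y;
  bcomplete : forall u : nat -> bcar,
    (forall eps, 0 < eps -> exists N, forall m n, (N <= m)%nat -> (N <= n)%nat ->
        bnorm (badd (u m) (bopp (u n))) < eps) ->
    exists l, forall eps, 0 < eps -> exists N, forall n, (N <= n)%nat ->
        bnorm (badd (u n) (bopp l)) < eps
}.

Arguments bzero {b0}. Arguments badd {b0}. Arguments bopp {b0}.
Arguments bscal {b0}. Arguments bnorm {b0}.

Definition seq_lim {B : Banach} (u : nat -> B) (l : B) : Prop :=
  forall eps, 0 < eps -> exists N, forall n, (N <= n)%nat -> bnorm (badd (u n) (bopp l)) < eps.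

Definition bounded_linear {B : Banach} (T : B -> B) : Prop :=
  (forall x y, T (badd x y) = badd (T x) (T y)) /\
  (forall a x, T (bscal a x) = bscal a (T x)) /\
  (exists C, forall x, bnorm (T x) <= C * bnorm x).

Definition L_aut {B : Banach} (T Tinv : B -> B) : Prop :=
  bounded_linear T /\ bounded_linear Tinv /\
  (forall x, T (Tinv x) = x) /\ (forall x, Tinv (T x) = x).

Definition closed_subspace {B : Banach} (E : B -> Prop) : Prop :=
  E bzero /\ (forall x y, E x -> E y -> E (badd x y)) /\
  (forall a x, E x -> E (bscal a x)) /\
  (forall u l, (forall n, E (u n)) -> seq_lim u l -> E l).

Definition complementary {B : Banach} (Em Ep : B -> Prop) : Prop :=
  closed_subspace Em /\ closed_subspace Ep /\
  (forall x, Em x -> Ep x -> x = bzero) /\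
  (forall x, exists a b, Em a /\ Ep b /\ x = badd a b).

Definition zpow {B : Banach} (T Tinv : B -> B) (z : Z) : B -> B :=
  match z with
  | Z0 => fun x => x
  | Zpos p => Nat.iter (Pos.to_nat p) T
  | Zneg p => Nat.iter (Pos.to_nat p) Tinv
  end.

Definition gen_hyperbolic {B : Banach} (T Tinv : B -> B) (Em Ep : B -> Prop) : Prop :=
  complementary Em Ep /\
  (forall x, Ep x -> Ep (T x)) /\
  (forall x, Em x -> Em (Tinv x)) /\
  exists C lam, 1 <= C /\ 0 < lam < 1 /\
    (forall (n : nat) x, Ep x -> bnorm (Nat.iter n T x) <= C * lam ^ n * bnorm x) /\
    (forall (n : nat) x, Em x -> bnorm (Nat.iter n Tinv x) <= C * lam ^ n * bnorm x).

Fixpoint bsum {B : Banach} (f : nat -> B) (N : nat) : B :=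
  match N with
  | O => bzero
  | S n => badd (bsum f n) (f n)
  end.

(* the bi-infinite series sum_{n in Z} w n converges absolutely with sum x:
   both one-sided series of norms converge and the symmetric partial sums
   sum_{n=-N}^{N} w n tend to x *)
Definition abs_sum_Z {B : Banach} (w : Z -> B) (x : B) : Prop :=
  (exists s, Un_cv (sum_f_R0 (fun n => bnorm (w (Z.of_nat n)))) s) /\
  (exists s, Un_cv (sum_f_R0 (fun n => bnorm (w (- Z.of_nat (S n))%Z))) s) /\
  seq_lim (fun N => badd (bsum (fun n => w (Z.of_nat n)) (S N))
                         (bsum (fun n => w (- Z.of_nat (S n))%Z) N)) x.

(* Main.v *)
Require Import Defs.
From Stdlib Require Import Reals ZArith Lra Lia.
Open Scope R_scope.

Lemma add0l (B : Banach) (x : B) : badd bzero x = x.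
Proof. rewrite badd_comm; apply badd_0. Qed.

Lemma addoppl (B : Banach) (x : B) : badd (bopp x) x = bzero.
Proof. rewrite badd_comm; apply badd_opp. Qed.

Lemma add_cancel_r (B : Banach) (x y z : B) : badd x z = badd y z -> x = y.
Proof.
  intro H. rewrite <- (badd_0 _ x), <- (badd_0 _ y), <- (badd_opp _ z).
  rewrite !badd_assoc, H. reflexivity.
Qed.

Lemma scal0 (B : Banach) (x : B) : bscal 0 x = bzero.
Proof.
  apply (add_cancel_r _ _ _ (bscal 0 x)). rewrite add0l, <- bscal_distr_r.
  f_equal; ring.
Qed.

Lemma opp_scal (B : Banach) (x : B) : bopp x = bscal (-1) x.
Proof.
  apply (add_cancel_r _ _ _ x). rewrite addoppl.
  rewrite <- (bscal_1 _ x) at 2. rewrite <- bscal_distr_r.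
  replace (-1 + 1) with 0 by ring. symmetry; apply scal0.
Qed.

Lemma norm_opp (B : Banach) (x : B) : bnorm (bopp x) = bnorm x.
Proof. rewrite opp_scal, bnorm_scal, Rabs_left by lra; ring. Qed.

Lemma opp_add (B : Banach) (x y : B) : bopp (badd x y) = badd (bopp x) (bopp y).
Proof. rewrite !opp_scal; apply bscal_distr_l. Qed.

Lemma add_ACA (B : Banach) (x y z w : B) :
  badd (badd x y) (badd z w) = badd (badd x z) (badd y w).
Proof.
  rewrite <- !badd_assoc. f_equal. rewrite !badd_assoc. f_equal. apply badd_comm.
Qed.

Definition additive {B : Banach} (f : B -> B) :=
  (forall x y, f (badd x y) = badd (f x) (f y)) /\ (forall x, f (bopp x) = bopp (f x)).

Lemma lin_additive (B : Banach) (T : B -> B) : bounded_linear T -> additive T.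
Proof.
  intros [H1 [H2 _]]. split; auto. intro x. rewrite !opp_scal. apply H2.
Qed.

Lemma iter_additive (B : Banach) (T : B -> B) n : additive T -> additive (Nat.iter n T).
Proof.
  intros [H1 H2]. induction n as [|n [IH1 IH2]]; split; intros; simpl; auto.
  - rewrite IH1; auto.
  - rewrite IH2; auto.
Qed.

Lemma iter_inv (B : Banach) (T Tinv : B -> B) n x :
  (forall x, Tinv (T x) = x) -> Nat.iter n Tinv (Nat.iter n T x) = x.
Proof.
  intro H. induction n; auto.
  rewrite (Nat.iter_succ_r n _ Tinv). simpl Nat.iter at 2. rewrite H. auto.
Qed.

Lemma iter_pres (B : Banach) (T : B -> B) (E : B -> Prop) n x :
  (forall x, E x -> E (T x)) -> E x -> E (Nat.iter n T x).
Proof. intros H Hx; induction n; simpl; auto. Qed.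

Lemma sub_closed (B : Banach) (E : B -> Prop) x y :
  closed_subspace E -> E x -> E y -> E (badd x (bopp y)).
Proof.
  intros [_ [Ha [Hs _]]] Hx Hy. apply Ha; auto. rewrite opp_scal; auto.
Qed.

Lemma bsum_ext (B : Banach) (f g : nat -> B) N :
  (forall n, f n = g n) -> bsum f N = bsum g N.
Proof. intro H; induction N; simpl; auto; rewrite IHN, H; auto. Qed.

Lemma bsum_tele (B : Banach) (g : nat -> B) N :
  bsum (fun n => badd (g n) (bopp (g (S n)))) N = badd (g O) (bopp (g N)).
Proof.
  induction N; simpl. { symmetry; apply badd_opp. }
  rewrite IHN. rewrite <- badd_assoc. f_equal.
  rewrite badd_assoc, addoppl, add0l. auto.
Qed.

Lemma zpow_pos (B : Banach) (T Tinv : B -> B) n x :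
  zpow T Tinv (Z.of_nat n) x = Nat.iter n T x.
Proof. destruct n; simpl; auto. rewrite SuccNat2Pos.id_succ. auto. Qed.

Lemma zpow_neg (B : Banach) (T Tinv : B -> B) n x :
  zpow T Tinv (- Z.of_nat n) x = Nat.iter n Tinv x.
Proof. destruct n; simpl; auto. rewrite SuccNat2Pos.id_succ. auto. Qed.

Lemma pow_dec (l : R) m n : 0 <= l <= 1 -> (m <= n)%nat -> l ^ n <= l ^ m.
Proof.
  intros Hl Hmn. induction Hmn. lra.
  simpl. assert (0 <= l ^ m0) by (apply pow_le; lra). nra.
Qed.

Lemma geom_cv (f : nat -> R) M l : 0 < l < 1 ->
  (forall n, 0 <= f n <= M * l ^ n) -> exists s, Un_cv (sum_f_R0 f) s.
Proof.
  intros Hl H.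
  destruct (Rseries_CV_comp f (fun n => M * l ^ n) H) as [s Hs].
  - exists (M * / (1 - l)).
    apply Un_cv_ext with (fun N => M * sum_f_R0 (fun n => 1 * l ^ n) N).
    { intro n. rewrite scal_sum. apply sum_eq. intros; ring. }
    apply CV_mult with (An := fun _ => M). { intros e He; exists O; intros; rewrite Rdist_eq; lra. }
    apply GP_infinite. rewrite Rabs_pos_eq; lra.
  - exists s. exact Hs.
Qed.

Lemma alg (B : Banach) (a b g h : B) :
  badd (badd (badd b (bopp g)) (badd a (bopp h))) (bopp (badd a b)) = badd (bopp g) (bopp h).
Proof.
  rewrite add_ACA, opp_add.
  rewrite <- badd_assoc, (badd_comm _ (badd (bopp g) (bopp h))), badd_assoc.
  rewrite (badd_comm _ (bopp a)). rewrite (add_ACA _ b a (bopp b) (bopp a)), !badd_opp, badd_0, add0l. auto.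
Qed.

Lemma tail_small C a b lam : 0 <= C -> 0 <= a -> 0 <= b -> 0 < lam < 1 ->
  forall eps, 0 < eps -> exists N, forall n, (N <= n)%nat -> C * (a + b) * lam ^ n < eps.
Proof.
  intros HC Ha Hb Hl eps He.
  set (K := C * (a + b)). assert (0 <= K) by (unfold K; nra).
  destruct (pow_lt_1_zero lam ltac:(rewrite Rabs_pos_eq; lra) (eps / (K + 1)))
    as [N HN]. { apply Rdiv_lt_0_compat; lra. }
  exists N. intros n Hn. specialize (HN n Hn). rewrite Rabs_pos_eq in HN by (apply pow_le; lra).
  assert (0 <= lam ^ n) by (apply pow_le; lra).
  apply Rmult_lt_compat_l with (r := K + 1) in HN; [|lra].
  replace ((K + 1) * (eps / (K + 1))) with eps in HN by (field; lra). nra.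
Qed.

Theorem mainTheorem19 (B : Banach) (T Tinv : B -> B) (Em Ep : B -> Prop)
  (x : B) (k : nat) :
  L_aut T Tinv ->
  gen_hyperbolic T Tinv Em Ep ->
  (1 <= k)%nat ->
  Nat.iter k T x = x ->
  exists v : B,
    (exists y, Em y /\ v = Nat.iter k T y) /\ Ep v /\
    abs_sum_Z (fun n : Z => zpow T Tinv (n * Z.of_nat k)%Z v) x.
Proof.
  intros HL HG Hk Hx.
  destruct HL as [HT [HTi [HTTi HTiT]]].
  destruct HG as [Hc [HEp [HEm [C [lam [HC [Hlam [HbEp HbEm]]]]]]]].
  destruct Hc as [HcEm [HcEp [_ Hdec]]].
  destruct (Hdec x) as [a [b [Ha [Hb Hxab]]]].
  assert (AT : forall n, additive (Nat.iter n T)) by (intro; apply iter_additive, lin_additive, HT).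
  assert (ATi : forall n, additive (Nat.iter n Tinv)) by (intro; apply iter_additive, lin_additive, HTi).
  pose (y := badd a (bopp (Nat.iter k Tinv a))).
  assert (Hy : Em y) by (apply sub_closed; auto; apply iter_pres; auto).
  assert (Hv : Nat.iter k T y = badd b (bopp (Nat.iter k T b))).
  { unfold y. rewrite (proj1 (AT k)), (proj2 (AT k)), iter_inv by auto.
    apply add_cancel_r with (badd a (Nat.iter k T b)).
    rewrite badd_assoc, <- (badd_assoc _ _ (bopp a) a), addoppl, badd_0.
    rewrite <- (proj1 (AT k)), <- Hxab, Hx, Hxab.
    rewrite add_ACA, addoppl, badd_0, badd_comm. auto. }
  assert (HvE : Ep (Nat.iter k T y)) by (rewrite Hv; apply sub_closed; auto; apply iter_pres; auto).
  exists (Nat.iter k T y). split. { exists y; auto. } split. { auto. }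
  assert (Hpos : forall n, zpow T Tinv (Z.of_nat n * Z.of_nat k)%Z (Nat.iter k T y)
     = Nat.iter (n * k) T (Nat.iter k T y)).
  { intro n. rewrite <- Nat2Z.inj_mul, zpow_pos. auto. }
  assert (Hpos2 : forall n, Nat.iter (n * k) T (Nat.iter k T y)
     = badd (Nat.iter (n * k) T b) (bopp (Nat.iter (S n * k) T b))).
  { intro n. rewrite Hv, (proj1 (AT _)), (proj2 (AT _)). rewrite Nat.mul_succ_l, Nat.iter_add. auto. }
  assert (Hneg : forall m, zpow T Tinv (- Z.of_nat (S m) * Z.of_nat k)%Z (Nat.iter k T y)
     = Nat.iter (m * k) Tinv y).
  { intro m. rewrite Z.mul_opp_l, <- Nat2Z.inj_mul, zpow_neg.
    rewrite Nat.mul_succ_l, Nat.iter_add, iter_inv by auto. auto. }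
  assert (Hneg2 : forall m, Nat.iter (m * k) Tinv y
     = badd (Nat.iter (m * k) Tinv a) (bopp (Nat.iter (S m * k) Tinv a))).
  { intro m. unfold y. rewrite (proj1 (ATi _)), (proj2 (ATi _)). rewrite Nat.mul_succ_l, Nat.iter_add. auto. }
  assert (Hpw : forall n, lam ^ (n * k) <= lam ^ n).
  { intro n. apply pow_dec. lra. nia. }
  assert (HCn : 0 <= C) by lra.
  split; [|split].
  - apply geom_cv with (M := C * bnorm (Nat.iter k T y)) (l := lam); auto.
    intro n. split. apply bnorm_nonneg. rewrite Hpos.
    eapply Rle_trans. apply HbEp; auto.
    assert (0 <= bnorm (Nat.iter k T y)) by apply bnorm_nonneg.
    assert (H0 : 0 <= C * bnorm (Nat.iter k T y)) by nra.
    pose proof (Rmult_le_compat_l _ _ _ H0 (Hpw n)). nra.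
  - apply geom_cv with (M := C * bnorm y) (l := lam); auto.
    intro n. split. apply bnorm_nonneg. rewrite Hneg.
    eapply Rle_trans. apply HbEm; auto.
    assert (0 <= bnorm y) by apply bnorm_nonneg.
    assert (H0 : 0 <= C * bnorm y) by nra.
    pose proof (Rmult_le_compat_l _ _ _ H0 (Hpw n)). nra.
  - intros eps He.
    destruct (tail_small C (bnorm a) (bnorm b) lam HCn (bnorm_nonneg _ _) (bnorm_nonneg _ _) Hlam eps He)
      as [N HN].
    exists N. intros n Hn.
    rewrite (bsum_ext _ _ (fun n => badd (Nat.iter (n * k) T b) (bopp (Nat.iter (S n * k) T b))) (S n))
      by (intro; rewrite Hpos; apply Hpos2).
    rewrite (bsum_ext _ _ (fun m => badd (Nat.iter (m * k) Tinv a) (bopp (Nat.iter (S m * k) Tinv a))) n)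
      by (intro; cbv beta; rewrite Hneg; apply Hneg2).
    rewrite !bsum_tele. simpl (0 * k)%nat. simpl (Nat.iter 0 _ _).
    rewrite Hxab, alg.
    eapply Rle_lt_trans; [apply bnorm_triangle|]. rewrite !norm_opp.
    eapply Rle_lt_trans; [|apply (HN n Hn)].
    assert (H1 := HbEp (S n * k)%nat b Hb). assert (H2 := HbEm (n * k)%nat a Ha).
    assert (lam ^ (S n * k) <= lam ^ n) by (apply pow_dec; [lra | nia]).
    assert (0 <= lam ^ (S n * k)) by (apply pow_le; lra).
    assert (0 <= lam ^ (n * k)) by (apply pow_le; lra).
    assert (0 <= bnorm a) by apply bnorm_nonneg. assert (0 <= bnorm b) by apply bnorm_nonneg.
    specialize (Hpw n).
    assert (Hb0 : 0 <= C * bnorm b) by nra. assert (Ha0 : 0 <= C * bnorm a) by nra.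
    pose proof (Rmult_le_compat_l _ _ _ Hb0 H). pose proof (Rmult_le_compat_l _ _ _ Ha0 Hpw).
    nra.
Qed.
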